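(* Let $r\ge2$, $1\le d<r$ and $M\in\mathrm{rep}(K_r)$. (1) $M\in\mathrm{rep}_{\mathrm{proj}}(K_r,d)$ if and only if $\mathrm{Hom}_{K_r}(C(\mathfrak w),\sigma_{K_r}(M))=(0)$ for all $\mathfrak w\in\mathrm{Gr}_{r-d}(A_r)$. (2) $M\in\mathrm{rep}_{\mathrm{proj}}(K_r,r-1)$ if and only if $\sigma_{K_r}(M)\in\mathrm{EKP}(K_r)$. (3) $\sigma_{K_r}^{-1}(\mathrm{rep}_{\mathrm{proj}}(K_r,d))\subseteq\mathrm{rep}_{\mathrm{proj}}(K_r,r-1)$. In particular, $\mathrm{rep}_{\mathrm{proj}}(K_r,d)$ is stable under $\sigma_{K_r}^{-1}$.
   Context: $k$ is algebraically closed of arbitrary characteristic; vector spaces finite-dimensional. $K_r$ is the Kronecker quiver with arrows $\gamma_1,\dots,\gamma_r:1\to2$; $A_r=\bigoplus_ik\gamma_i$; for $M=(M_1,M_2,(M(\gamma_i))_i)\in\mathrm{rep}(K_r)$, $\psi_M:A_r\otimes_kM_1\to M_2$, $\gamma_i\otimes m\mapsto M(\gamma_i)(m)$, and $\psi_{M,\mathfrak v}$ is its restriction to $\mathfrak v\otimes_kM_1$. For $e\in\{1,\dots,r\}$, $\mathrm{rep}_{\mathrm{proj}}(K_r,e)$ is the full subcategory of those $M$ with $\psi_{M,\mathfrak v}$ injective for all $\mathfrak v\in\mathrm{Gr}_e(A_r)$ (the Grassmannian of $e$-dimensional subspaces); $\mathrm{EKP}(K_r)=\mathrm{rep}_{\mathrm{proj}}(K_r,1)$.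 For $\mathfrak w\in\mathrm{Gr}_{r-d}(A_r)$, $C(\mathfrak w)=(k,A_r/\mathfrak w)$ with $C(\mathfrak w)(\gamma_i)(\lambda)=\lambda\gamma_i+\mathfrak w$. The shift functor $\sigma_{K_r}$: identify $\psi_M$ with $M_1^r\to M_2$, $(m_i)\mapsto\sum_iM(\gamma_i)(m_i)$; then $\sigma_{K_r}(M)=(\ker\psi_M,M_1)$ with $\sigma_{K_r}(M)(\gamma_i)$ the restriction to $\ker\psi_M$ of the $i$-th projection $M_1^r\to M_1$ (on morphisms $f$: componentwise $f_1$ on $\ker\psi_M$ and $f_1$). Dually $\sigma_{K_r}^{-1}(M)=(M_2,\mathrm{coker}\,\varphi)$ where $\varphi:M_1\to M_2^r$, $m\mapsto(M(\gamma_i)(m))_i$, and $\sigma_{K_r}^{-1}(M)(\gamma_i)$ is the $i$-th inclusion $M_2\to M_2^r$ followed by the projection onto $\mathrm{coker}\,\varphi$. (These are the BGP reflection functors composed with the identification of $K_r$ with its opposite quiver.) *)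

(* Defs.v *)
From HB Require Import structures.
From mathcomp Require Import all_boot all_algebra.
Set Implicit Arguments. Unset Strict Implicit. Unset Printing Implicit Defensive.
Import GRing.Theory.
Local Open Scope ring_scope.


(* A representation M = (M_1, M_2, (M(gamma_i))_i) of the Kronecker quiver K_r
   over the field k. *)
Record krep (k : fieldType) (r : nat) := KRep {
  kV1 : vectType k;
  kV2 : vectType k;
  karr : 'I_r -> 'Hom(kV1, kV2) }.

Section KronDefs.
Variables (k : fieldType) (r : nat).

Definition Ar := 'rV[k]_r.
Definition gam (i : 'I_r) : Ar := \row_(j < r) (j == i)%:R.

(* Quotient V/U, modelled by the complement U^C together with the
   canonical projection along U onto U^C (kernel exactly U). *)
Definition quotT (V : vectType k) (U : {vspace V}) : vectType k :=
  subvs_of (U^C)%VS.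
Definition qproj (V : vectType k) (U : {vspace V}) : 'Hom(V, quotT U) :=
  linfun (fun v : V => Subvs (memv_pi (U^C)%VS U v)).

(* A_r (x)_k M_1 is identified with M_1^r via gamma_i (x) m |-> m in slot i. *)
Definition psi (M : krep k r) : 'Hom({ffun 'I_r -> kV1 M}, kV2 M) :=
  linfun (fun m : {ffun 'I_r -> kV1 M} => \sum_(i < r) karr M i (m i)).

Definition tens1 (M : krep k r) (a : Ar) (m : kV1 M) : {ffun 'I_r -> kV1 M} :=
  [ffun i => a ord0 i *: m].

Definition tensv (M : krep k r) (v : {vspace Ar}) : {vspace {ffun 'I_r -> kV1 M}} :=
  <<[seq tens1 a m | a <- vbasis v, m <- vbasis (fullv : {vspace kV1 M})]>>%VS.

Definition rep_proj (M : krep k r) (e : nat) : Prop :=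
  forall v : {vspace Ar}, (\dim v)%N = e -> {in tensv M v &, injective (psi M)}.

Definition EKP (M : krep k r) : Prop := rep_proj M 1.

Definition Crep (w : {vspace Ar}) : krep k r :=
  @KRep k r (k^o) (quotT w)
    (fun i => linfun (fun l : k^o => qproj w (l *: gam i))).

Definition hom_zero (M N : krep k r) : Prop :=
  forall (f1 : 'Hom(kV1 M, kV1 N)) (f2 : 'Hom(kV2 M, kV2 N)),
    (forall i x, f2 (karr M i x) = karr N i (f1 x)) -> f1 = 0 /\ f2 = 0.

Definition sigma (M : krep k r) : krep k r :=
  @KRep k r (subvs_of (lker (psi M))) (kV1 M)
    (fun i => linfun (fun x : subvs_of (lker (psi M)) => (vsval x) i)).

Definition phiM (M : krep k r) : 'Hom(kV1 M, {ffun 'I_r -> kV2 M}) :=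
  linfun (fun m : kV1 M => [ffun i => karr M i m]).

Definition incl (V : vectType k) (i : 'I_r) : 'Hom(V, {ffun 'I_r -> V}) :=
  linfun (fun y : V => [ffun j => if j == i then y else 0]).

Definition sigma_inv (M : krep k r) : krep k r :=
  @KRep k r (kV2 M) (quotT (limg (phiM M)))
    (fun i => (qproj (limg (phiM M)) \o incl (kV2 M) i)%VF).

End KronDefs.

(* Main.v *)
Require Import Defs.
From HB Require Import structures.
From mathcomp Require Import all_boot all_algebra.
From mathcomp Require Import zify.
Import GRing.Theory.
Local Open Scope ring_scope.
Set Implicit Arguments. Unset Strict Implicit. Unset Printing Implicit Defensive.

Lemma lfunE' (k : fieldType) (aT rT : vectType k) (f : aT -> rT) :
  linear f -> linfun f =1 f.
Proof.
move=> lf.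
pose F : {linear aT -> rT} := HB.pack f (GRing.isLinear.Build k aT rT *:%R f lf).
exact: (lfunE F).
Qed.

Section Basics.
Variables (k : fieldType) (r : nat).
Local Notation Ar := (Ar k r).

Definition dotv (a b : Ar) : k := \sum_i a ord0 i * b ord0 i.
Definition dotx (V : vectType k) (c : Ar) (x : {ffun 'I_r -> V}) : V :=
  \sum_i c ord0 i *: x i.

Lemma dotvC a b : dotv a b = dotv b a.
Proof. by apply: eq_bigr => i _; rewrite mulrC. Qed.

Lemma dotv_linr a : linear (fun b : Ar => (dotv a b : k^o)).
Proof.
move=> l b c; rewrite /dotv /= scaler_sumr -big_split /=; apply: eq_bigr => i _.
by rewrite !mxE mulrDr mulrCA.
Qed.

Lemma dotv_linl b : linear (fun a : Ar => (dotv a b : k^o)).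
Proof. by move=> l a c; rewrite /= !(dotvC _ b); apply: dotv_linr. Qed.

Lemma dotx_linl (V : vectType k) (x : {ffun 'I_r -> V}) :
  linear (fun c : Ar => dotx c x).
Proof.
move=> l a c; rewrite /dotx scaler_sumr -big_split /=; apply: eq_bigr => i _.
by rewrite !mxE scalerDl scalerA.
Qed.

Lemma dotx_linr (V : vectType k) (c : Ar) :
  linear (fun x : {ffun 'I_r -> V} => dotx c x).
Proof.
move=> l a b; rewrite /dotx scaler_sumr -big_split /=; apply: eq_bigr => i _.
by rewrite !ffunE scalerDr !scalerA mulrC.
Qed.

Definition perpf (w : {vspace Ar}) : 'Hom(Ar, 'Hom(subvs_of w, k^o)) :=
  linfun (fun a : Ar => linfun (fun b : subvs_of w => (dotv a (vsval b) : k^o))).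
Definition perp w := lker (perpf w).

Lemma perp_inner_lin w a : linear (fun b : subvs_of w => (dotv a (vsval b) : k^o)).
Proof. by move=> l u v; exact: (dotv_linr a l (vsval u) (vsval v)). Qed.

Lemma perp_outer_lin w :
  linear (fun a : Ar => linfun (fun b : subvs_of w => (dotv a (vsval b) : k^o))).
Proof.
move=> l u v; apply/lfunP => b.
rewrite add_lfunE scale_lfunE !lfunE'; try exact: perp_inner_lin.
exact: (dotv_linl (vsval b) l u v).
Qed.

Lemma perpfE (w : {vspace Ar}) a b : perpf w a b = dotv a (vsval b).
Proof. by rewrite /perpf (lfunE' (@perp_outer_lin w)) (lfunE' (@perp_inner_lin w a)). Qed.

Lemma mem_perp (w : {vspace Ar}) a : reflect (forall b, b \in w -> dotv a b = 0) (a \in perp w).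
Proof.
rewrite memv_ker; apply: (iffP eqP) => [h b bw | h].
  by rewrite -(perpfE a (Subvs bw)) h zero_lfunE.
by apply/lfunP => b; rewrite perpfE zero_lfunE h // subvsP.
Qed.


Lemma dimAr : \dim (fullv : {vspace Ar}) = r.
Proof. by rewrite dimvf /Ar dim_matrix mul1r. Qed.

Lemma dim_le_r (w : {vspace Ar}) : (\dim w <= r)%N.
Proof. by have := dimvS (subvf w); rewrite dimAr. Qed.

Lemma dim_perp_ge (w : {vspace Ar}) : (r - \dim w <= \dim (perp w))%N.
Proof.
have := limg_ker_dim (perpf w) fullv; rewrite capfv dimAr => e.
have : (\dim (perpf w @: fullv) <= \dim w)%N.
  have := dimvS (subvf (perpf w @: fullv)); rewrite dimvf /=.
  by rewrite /dim /= muln1.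
rewrite /perp; lia.
Qed.

Lemma perp_full : perp fullv = 0%VS.
Proof.
apply/eqP; rewrite -subv0; apply/subvP => a /mem_perp h; rewrite memv0.
apply/eqP/rowP => i; rewrite mxE.
have := h (gam k i) (memvf _); rewrite /dotv (bigD1 i) //= big1 => [|j ji].
  by rewrite !mxE eqxx mulr1 addr0 (ord1 ord0).
by rewrite !mxE (negbTE ji) mulr0.
Qed.

Lemma perp_cap (w w' : {vspace Ar}) : (perp w :&: perp w' <= perp (w + w'))%VS.
Proof.
apply/subvP => a /memv_capP [/mem_perp h1 /mem_perp h2]; apply/mem_perp => b.
case/memv_addP => [u uw [v vw' ->]].
by have := dotv_linr a 1 u v; rewrite /= scale1r (h1 u uw) (h2 v vw') addr0 => ->; rewrite scaler0.
Qed.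

Lemma dim_perp (w : {vspace Ar}) : \dim (perp w) = (r - \dim w)%N.
Proof.
have h0 : (perp w :&: perp w^C = 0)%VS.
  apply/eqP; rewrite -subv0 -perp_full -(addv_complf w); exact: perp_cap.
have := dimv_sum_cap (perp w) (perp w^C); rewrite h0 dimv0 addn0.
have := dim_perp_ge w^C; rewrite dimv_compl dimAr.
have := dim_le_r (perp w + perp w^C); have := dim_perp_ge w; have := dim_le_r w.
move=> h1 h2 h3 h4 h5; rewrite h5 in h3; lia.
Qed.

Lemma perpK (w : {vspace Ar}) : perp (perp w) = w.
Proof.
apply/esym/eqP; rewrite eqEdim; apply/andP; split.
  apply/subvP => b bw; apply/mem_perp => a /mem_perp h; rewrite dotvC h //.
by rewrite !dim_perp subKn ?dim_le_r.
Qed.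

End Basics.

Lemma sub_dim (k : fieldType) (vT : vectType k) (U : {vspace vT}) n :
  (n <= \dim U)%N -> exists W : {vspace vT}, (W <= U)%VS /\ \dim W = n.
Proof.
move=> hn; exists <<take n (vbasis U)>>%VS; split.
  by apply/span_subvP => x /mem_take /vbasis_mem.
have fr : free (take n (vbasis U)).
  apply: (@catl_free _ _ (drop n (vbasis U))); rewrite cat_take_drop.
  exact: basis_free (vbasisP U).
by rewrite (eqnP fr) size_takel // size_tuple.
Qed.

Lemma dim1P (k : fieldType) (vT : vectType k) (v : {vspace vT}) :
  \dim v = 1%N -> exists2 b, b != 0 & v = <[b]>%VS.
Proof.
move=> h; have nz : vpick v != 0 by rewrite vpick0 -dimv_eq0 h.
exists (vpick v) => //; apply/eqP; rewrite eq_sym eqEdim -memvE memv_pick /=.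
by rewrite dim_vline nz h.
Qed.


Section Tens.
Variables (k : fieldType) (r : nat) (M : krep k r).
Local Notation Ar := (Ar k r).
Local Notation V := (kV1 M).

Lemma tens1_sumr (a : Ar) I (s : seq I) (F : I -> V) :
  tens1 a (\sum_(i <- s) F i) = \sum_(i <- s) tens1 a (F i).
Proof.
by apply/ffunP => j; rewrite sum_ffunE !ffunE scaler_sumr; apply: eq_bigr => i _; rewrite ffunE.
Qed.

Lemma tens1_suml (m : V) I (s : seq I) (F : I -> Ar) :
  tens1 (\sum_(i <- s) F i) m = \sum_(i <- s) tens1 (F i) m.
Proof.
apply/ffunP => j; rewrite sum_ffunE !ffunE summxE scaler_suml.
by apply: eq_bigr => i _; rewrite ffunE.
Qed.

Lemma tens1_Zr (a : Ar) l (m : V) : tens1 a (l *: m) = l *: tens1 a m.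
Proof. by apply/ffunP => j; rewrite !ffunE !scalerA mulrC. Qed.

Lemma tens1_Zl (a : Ar) l (m : V) : tens1 (l *: a) m = l *: tens1 a m.
Proof. by apply/ffunP => j; rewrite !ffunE mxE scalerA. Qed.

Lemma tens1_linr (a : Ar) : linear (fun m : V => tens1 a m).
Proof. by move=> l u v; apply/ffunP => j; rewrite !ffunE scalerDr !scalerA mulrC. Qed.

Lemma mem_tens1 (v : {vspace Ar}) (a : Ar) (m : V) :
  a \in v -> tens1 a m \in tensv M v.
Proof.
move=> av; rewrite (coord_vbasis av) (coord_vbasis (memvf m)).
rewrite tens1_suml; apply: memv_suml => j _.
rewrite tens1_Zl tens1_sumr; apply: memvZ; apply: memv_suml => l _.
rewrite tens1_Zr; apply: memvZ; apply: memv_span.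
by apply: allpairs_f; apply: mem_nth; rewrite size_tuple.
Qed.

Lemma dotx_tens1 (c a : Ar) (m : V) : dotx c (tens1 a m) = dotv c a *: m.
Proof.
rewrite /dotx /dotv scaler_suml; apply: eq_bigr => i _.
by rewrite ffunE scalerA.
Qed.

Lemma tens_ann (v : {vspace Ar}) x c :
  x \in tensv M v -> c \in perp v -> dotx c x = 0.
Proof.
move=> xin cp.
have : (tensv M v <= lker (linfun (fun x => dotx c x)))%VS.
  apply/span_subvP => y /allpairsP [[a m] [ain min ->]] /=.
  rewrite memv_ker (lfunE' (@dotx_linr _ _ _ c)) dotx_tens1.
  by move/mem_perp: cp => ->; rewrite ?scale0r // vbasis_mem.
by move/subvP/(_ x xin); rewrite memv_ker (lfunE' (@dotx_linr _ _ _ c)) => /eqP.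
Qed.

Local Notation e := (vbasis (fullv : {vspace V})).
Local Notation n := (\dim (fullv : {vspace V})).

Definition xi (x : {ffun 'I_r -> V}) (l : 'I_n) : Ar := \row_i coord e l (x i).

Lemma tens_decomp x : x = \sum_(l < n) tens1 (xi x l) e`_l.
Proof.
apply/ffunP => i; rewrite sum_ffunE {1}(coord_vbasis (memvf (x i))).
by apply: eq_bigr => l _; rewrite !ffunE mxE.
Qed.

Lemma xi_mem (v : {vspace Ar}) x :
  (forall c, c \in perp v -> dotx c x = 0) -> forall l, xi x l \in v.
Proof.
move=> h l; rewrite -(perpK v); apply/mem_perp => c cp.
have := congr1 (coord e l) (h c cp); rewrite linear0 /dotx linear_sum /= => <-.
by rewrite /dotv; apply: eq_bigr => i _; rewrite linearZ mxE mulrC.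
Qed.

Lemma tens_dual (v : {vspace Ar}) x :
  (forall c, c \in perp v -> dotx c x = 0) -> x \in tensv M v.
Proof.
move=> h; rewrite (tens_decomp x); apply: memv_suml => l _; apply: mem_tens1.
exact: xi_mem.
Qed.

Lemma tens_line (b : Ar) x : x \in tensv M <[b]>%VS -> exists u, x = tens1 b u.
Proof.
move=> xin; have h := xi_mem (fun c cp => tens_ann xin cp).
have /fin_all_exists [mu hmu] : forall l, exists mu : k, xi x l = mu *: b.
  by move=> l; apply/vlineP.
exists (\sum_l mu l *: e`_l); rewrite tens1_sumr {1}(tens_decomp x).
by apply: eq_bigr => l _; rewrite hmu tens1_Zl tens1_Zr.
Qed.

Lemma tens1_eq0 (a : Ar) (m : V) : a != 0 -> tens1 a m = 0 -> m = 0.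
Proof.
move=> an0.
have [i ai] : exists i, a ord0 i != 0.
  apply/existsP; apply: contraNT an0 => /existsPn h; apply/eqP/rowP => j.
  rewrite mxE; apply/eqP/negbNE/h.
move/ffunP/(_ i); rewrite !ffunE => /eqP; rewrite scaler_eq0 (negbTE ai) /=.
by move/eqP.
Qed.

End Tens.

Section QSec.
Variables (k : fieldType) (r : nat).
Local Notation Ar := (Ar k r).

Definition Hw (M : krep k r) (w : {vspace Ar}) :=
  forall x, x \in lker (psi M) -> (forall c, c \in w -> dotx c x = 0) -> x = 0.
Definition Q (M : krep k r) e :=
  forall w : {vspace Ar}, \dim w = (r - e)%N -> Hw M w.

Lemma inj_subP (U V : vectType k) (f : 'Hom(U, V)) (S : {vspace U}) :
  (forall z, z \in S -> f z = 0 -> z = 0) <-> {in S &, injective f}.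
Proof.
split=> [h x y xs ys fxy | h z zs fz].
  apply/eqP; rewrite -subr_eq0; apply/eqP/h; first exact: memvB.
  by rewrite linearB /= fxy subrr.
by apply: h zs (mem0v S) _; rewrite fz linear0.
Qed.

Lemma repQ (M : krep k r) e : (e <= r)%N -> rep_proj M e <-> Q M e.
Proof.
move=> er; split.
  move=> h w dw x xk ann.
  have dv : \dim (perp w) = e by rewrite dim_perp dw subKn.
  apply: (proj2 (inj_subP _ _) (h _ dv)).
    by apply: tens_dual => c; rewrite perpK; exact: ann.
  by apply/eqP; rewrite -memv_ker.
move=> h v dv; apply/inj_subP => z zs pz; apply: (h (perp v)).
- by rewrite dim_perp dv.
- by rewrite memv_ker pz.
- by move=> c cp; exact: tens_ann zs cp.
Qed.

Lemma Q_mono (M : krep k r) e e' :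
  (e' <= e)%N -> (e <= r)%N -> Q M e -> Q M e'.
Proof.
move=> le er h w dw.
have : (r - e <= \dim w)%N by rewrite dw; lia.
case/sub_dim => W [Ww dW] x xk ann.
by apply: (h W dW x xk) => c cW; apply: ann; exact: (subvP Ww).
Qed.

End QSec.

Section Part1.
Variables (k : fieldType) (r : nat).
Local Notation Ar := (Ar k r).

Lemma psiE (M : krep k r) m : psi M m = \sum_i karr M i (m i).
Proof.
rewrite /psi lfunE' // => l u v; rewrite scaler_sumr -big_split /=.
by apply: eq_bigr => i _; rewrite !ffunE linearP.
Qed.

Lemma sigma_arrE (M : krep k r) i (x : subvs_of (lker (psi M))) :
  karr (sigma M) i x = (vsval x) i.
Proof. by rewrite /= lfunE' // => l u v; rewrite [vsval _]linearP /= !ffunE. Qed.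

Lemma qprojE (V : vectType k) (U : {vspace V}) x :
  vsval (qproj U x) = daddv_pi U^C U x.
Proof.
rewrite /qproj lfunE' // => l u v; apply: val_inj; rewrite /= linearP //.
Qed.

Lemma Crep_arrE (w : {vspace Ar}) i (l : k) :
  karr (Crep w) i l = qproj w (l *: gam k i).
Proof.
rewrite /= lfunE' // => l1 u v; rewrite /= -linearP /=; congr (qproj w _).
by rewrite scalerDl scalerA.
Qed.

Lemma row_gam (c : Ar) : c = \sum_i c ord0 i *: gam k i.
Proof.
apply/rowP => j; rewrite summxE (bigD1 j) //= big1 => [|i ij].
  by rewrite !mxE eqxx mulr1 addr0 (ord1 0).
by rewrite !mxE eq_sym (negbTE ij) mulr0.
Qed.

Lemma dotx_gam (V : vectType k) i (x : {ffun 'I_r -> V}) : dotx (gam k i) x = x i.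
Proof.
rewrite /dotx (bigD1 i) //= big1 => [|j ji]; first by rewrite mxE eqxx scale1r addr0.
by rewrite mxE (negbTE ji) scale0r.
Qed.

Lemma dotx0 (V : vectType k) (c : Ar) : dotx c (0 : {ffun 'I_r -> V}) = 0.
Proof. by rewrite /dotx big1 // => i _; rewrite ffunE scaler0. Qed.

Section Pi.
Variables (V : vectType k) (w : {vspace V}).
Let pi := daddv_pi w^C w.
Let cap0 : (w^C :&: w = 0)%VS. Proof. by rewrite capvC capv_compl. Qed.
Let addpi c : pi c + daddv_pi w w^C c = c.
Proof. by apply: daddv_pi_add cap0 _; rewrite addvC addv_complf memvf. Qed.

Lemma pi_in_w c : c \in w -> pi c = 0.
Proof.
move=> cw; have := addpi c; rewrite (daddv_pi_id (capv_compl w) cw).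
by move/(canRL (addrK c)); rewrite subrr.
Qed.

Lemma pi_sub c : c - pi c \in w.
Proof. by rewrite -{1}(addpi c) [pi c + _]addrC addrK memv_pi. Qed.

Lemma pi_id y : y \in (w^C)%VS -> pi y = y.
Proof. exact: daddv_pi_id cap0. Qed.

Lemma pi_eq0 c : pi c = 0 -> c \in w.
Proof. by move=> h; rewrite -(addpi c) h add0r memv_pi. Qed.
End Pi.

Lemma Hw_hom (M : krep k r) (w : {vspace Ar}) :
  Hw M w <-> hom_zero (Crep w) (sigma M).
Proof.
have L x := lfunE' (@dotx_linl k r (kV1 M) x).
split.
  move=> H f1 f2 comm.
  set x := vsval (f1 1).
  have key : forall c, dotx c x = f2 (qproj w c).
    move=> c; rewrite (row_gam c) -L !linear_sum; apply: eq_bigr => i _.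
    rewrite !linearZ /= L dotx_gam; congr (_ *: _).
    by have := comm i 1; rewrite Crep_arrE scale1r sigma_arrE => ->.
  have x0 : x = 0.
    apply: H; first exact: subvsP.
    move=> c cw; rewrite key.
    have -> : qproj w c = 0 by apply: subvs_inj; rewrite qprojE pi_in_w // linear0.
    by rewrite linear0.
  split.
    apply/lfunP => l; rewrite zero_lfunE.
    have -> : l = l *: (1 : k^o) by rewrite /GRing.scale /= mulr1.
    rewrite linearZ /=.
    have -> : f1 1 = 0 by apply: subvs_inj; rewrite -/x x0 linear0.
    by rewrite scaler0.
  apply/lfunP => y; rewrite zero_lfunE.
  have -> : y = qproj w (vsval y) by apply: subvs_inj; rewrite qprojE pi_id // subvsP.
  by rewrite -key x0 dotx0.
move=> H x xk ann.
pose f2 : 'Hom(kV2 (Crep w), kV2 (sigma M)) :=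
  linfun (fun y : quotT w => dotx (vsval y) x).
have f2E y : f2 y = dotx (vsval y) x.
  by rewrite lfunE' // => l u v; exact: (@dotx_linl k r _ x l (vsval u) (vsval v)).
pose s : kV1 (sigma M) := Subvs xk.
pose f1 : 'Hom(kV1 (Crep w), kV1 (sigma M)) := linfun (fun l : k^o => l *: s).
have f1E l : f1 l = l *: s.
  by rewrite lfunE' // => l1 u v /=; rewrite scalerDl scalerA.
have comm : forall i l, f2 (karr (Crep w) i l) = karr (sigma M) i (f1 l).
  move=> i l; rewrite f2E Crep_arrE qprojE sigma_arrE f1E.
  set c := l *: gam k i.
  have -> : daddv_pi w^C w c = c - (c - daddv_pi w^C w c) by rewrite subKr.
  rewrite -L linearB /= !L (ann _ (pi_sub _ _)) subr0 /c.
  by rewrite -L linearZ /= L dotx_gam /= ffunE.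
have [f10 _] := H f1 f2 comm.
have : f1 1 = 0 by rewrite f10 zero_lfunE.
by rewrite f1E scale1r => /(congr1 val).
Qed.

End Part1.

Section Parts23.
Variables (k : fieldType) (r : nat).
Local Notation Ar := (Ar k r).

Lemma psi_sig_tens (M : krep k r) (a : Ar) (u : kV1 (sigma M)) :
  psi (sigma M) (tens1 a u) = dotx a (vsval u).
Proof.
rewrite psiE /dotx; apply: eq_bigr => i _.
by rewrite sigma_arrE ffunE [vsval _]linearZ /= ffunE.
Qed.

Lemma part2 (M : krep k r) : (1 <= r)%N -> EKP (sigma M) <-> Q M (r - 1).
Proof.
move=> r1; have e1 : (r - (r - 1) = 1)%N by lia.
have L x := lfunE' (@dotx_linl k r (kV1 M) x).
split.
  move=> h w; rewrite e1 => /dim1P [a an0 ->] x xk ann.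
  have ax : dotx a x = 0 by apply: ann; exact: memv_line.
  pose u : kV1 (sigma M) := Subvs xk.
  have da : \dim <[a]>%VS = 1%N by rewrite dim_vline an0.
  have := proj2 (inj_subP _ _) (h <[a]>%VS da) (tens1 a u) (mem_tens1 u (memv_line a)).
  rewrite psi_sig_tens /= ax => /(_ erefl) tz.
  by have := @tens1_eq0 _ _ (sigma M) a u an0 tz => /(congr1 (@vsval _ _ _)).
move=> h v /dim1P [b bn0 ->]; apply/inj_subP => z zin pz.
case: (tens_line zin) => u zu; move: pz; rewrite zu psi_sig_tens => pz.
have : vsval u = 0.
  apply: (h <[b]>%VS); first by rewrite dim_vline bn0 e1.
    exact: subvsP.
  by move=> c /vlineP [mu ->]; rewrite -L linearZ /= L pz scaler0.
move=> u0; have -> : u = 0 by apply: subvs_inj; rewrite u0 linear0.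
by apply/ffunP => i; rewrite !ffunE scaler0.
Qed.

Lemma inclE (V : vectType k) (i : 'I_r) (y : V) :
  incl V i y = [ffun j => if j == i then y else 0].
Proof.
rewrite /incl lfunE' // => l u v; apply/ffunP => j; rewrite !ffunE.
by case: eqP => _ //; rewrite scaler0 addr0.
Qed.

Lemma phiME (M : krep k r) m : phiM M m = [ffun i => karr M i m].
Proof.
by rewrite /phiM lfunE' // => l u v; apply/ffunP => j; rewrite !ffunE linearP.
Qed.

Lemma psiNE (M : krep k r) x : psi (sigma_inv M) x = qproj (limg (phiM M)) x.
Proof.
rewrite psiE.
have {2}-> : x = \sum_i incl (kV2 M) i (x i).
  apply/ffunP => j; rewrite sum_ffunE (bigD1 j) //= big1 => [|i ij].
    by rewrite inclE ffunE eqxx addr0.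
  by rewrite inclE ffunE eq_sym (negbTE ij).
rewrite linear_sum; apply: eq_bigr => i _ /=.
by rewrite comp_lfunE.
Qed.

Lemma part3 (M : krep k r) :
  (1 <= r)%N -> Q M 1 -> Q (sigma_inv M) (r - 1).
Proof.
move=> r1 h; have e1 : (r - (r - 1) = 1)%N by lia.
move=> w; rewrite e1 => /dim1P [a an0 ->] x xk ann.
have ax : dotx a x = 0 by apply: ann; exact: memv_line.
have : x \in limg (phiM M).
  move: xk; rewrite memv_ker psiNE => /eqP /(congr1 (@vsval _ _ _)).
  by rewrite qprojE linear0; exact: pi_eq0.
case/memv_imgP => m _ xe; move: ax; rewrite xe => ax.
have hm : tens1 a m = 0.
  apply: (h (perp <[a]>%VS)).
  - by rewrite dim_perp dim_vline an0.
  - rewrite memv_ker psiE; apply/eqP; rewrite -[RHS]ax /dotx; apply: eq_bigr => i _.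
    by rewrite !ffunE phiME ffunE linearZ.
  - move=> c /mem_perp cp; rewrite dotx_tens1 cp ?scale0r //; exact: memv_line.
by rewrite (tens1_eq0 an0 hm) linear0.
Qed.

End Parts23.

Unset Implicit Arguments.

Theorem theorem2p2p3 (k : closedFieldType) (r d : nat) :
  (2 <= r)%N -> (1 <= d)%N -> (d < r)%N ->
  (forall M : krep k r,
     rep_proj M d <->
     (forall w : {vspace Ar k r}, \dim w = (r - d)%N -> hom_zero (Crep w) (sigma M)))
  /\ (forall M : krep k r, rep_proj M (r - 1) <-> EKP (sigma M))
  /\ (forall M : krep k r, rep_proj M d -> rep_proj (sigma_inv M) (r - 1))
  /\ (forall M : krep k r, rep_proj M d -> rep_proj (sigma_inv M) d).
Proof.
move=> r2 d1 dr.
have r1 : (1 <= r)%N by lia.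
have dr' : (d <= r)%N by lia.
have r1r : (r - 1 <= r)%N by lia.
have dr1 : (d <= r - 1)%N by lia.
split; [|split; [|split]].
- move=> M; apply: (iff_trans (repQ M dr')).
  by split=> h w dw; apply/Hw_hom; exact: h.
- move=> M; apply: (iff_trans (repQ M r1r)); apply: iff_sym; exact: part2.
- move=> M /(repQ M dr') hq; apply/(repQ _ r1r); apply: part3 r1 _.
  exact: Q_mono d1 dr' hq.
- move=> M /(repQ M dr') hq; apply/(repQ _ dr'); apply: Q_mono dr1 r1r _.
  apply: part3 r1 _; exact: Q_mono d1 dr' hq.
Qed.
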